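(* For every integer $n\geq 13$ there exists a neutral graph on $n$ vertices that is not a tree.
   Context: All graphs are finite, simple and connected. For a graph $G=(V,E)$ with $m=|E|\geq 1$ edges, let $d_u$ denote the degree of vertex $u$ and write sums over edges $e_{uv}\in E$ (each edge counted once). The assortativity coefficient of $G$ is $$r(G)=\frac{m^{-1}\sum_{e_{uv}\in E} d_{u}d_{v}-\Big[m^{-1}\sum_{e_{uv}\in E} \tfrac{1}{2}(d_{u}+d_{v})\Big]^{2}}{m^{-1}\sum_{e_{uv}\in E} \tfrac{1}{2}(d^{2}_{u}+d^{2}_{v})-\Big[m^{-1}\sum_{e_{uv}\in E} \tfrac{1}{2}(d_{u}+d_{v})\Big]^{2}},$$ defined whenever the denominator is nonzero. $G$ is called neutral if $r(G)$ is defined and $r(G)=0$. *)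

(* Defs.v *)
From mathcomp Require Import all_boot all_order all_algebra.
Set Implicit Arguments. Unset Strict Implicit. Unset Printing Implicit Defensive.
Import Order.TTheory GRing.Theory Num.Theory.

Section Graphs.
Variable n : nat.
Implicit Types e : rel 'I_n.

Definition simple_graph e : Prop := symmetric e /\ irreflexive e.

Definition connected_graph e : Prop := forall x y : 'I_n, connect e x y.

Definition acyclic e : Prop :=
  forall s : seq 'I_n, uniq s -> 3 <= size s -> ~~ cycle e s.

Definition is_tree e : Prop := connected_graph e /\ acyclic e.

Definition deg e (u : 'I_n) : nat := #|[set v | e u v]|.

Definition edge_sum e (F : 'I_n -> 'I_n -> rat) : rat :=
  \sum_(u : 'I_n) \sum_(v : 'I_n | (u < v)%N && e u v) F u v.

Definition nedges e : nat :=
  \sum_(u : 'I_n) \sum_(v : 'I_n | (u < v)%N && e u v) 1.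

Local Open Scope ring_scope.

Definition assort_mean e : rat :=
  (nedges e)%:R^-1 * edge_sum e (fun u v => 2^-1 * ((deg e u)%:R + (deg e v)%:R)).

Definition assort_num e : rat :=
  (nedges e)%:R^-1 * edge_sum e (fun u v => (deg e u)%:R * (deg e v)%:R)
  - (assort_mean e) ^+ 2.

Definition assort_den e : rat :=
  (nedges e)%:R^-1 * edge_sum e (fun u v => 2^-1 * ((deg e u)%:R ^+ 2 + (deg e v)%:R ^+ 2))
  - (assort_mean e) ^+ 2.

Definition assortativity e : rat := assort_num e / assort_den e.

(* r(G) defined (m >= 1 and denominator nonzero) and equal to 0 *)
Definition neutral e : Prop :=
  (0 < nedges e)%N /\ assort_den e != 0 /\ assortativity e = 0.

End Graphs.

(* Main.v *)
Require Import Defs.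
From mathcomp Require Import all_boot all_order all_algebra zify.
From mathcomp Require Import ring lra.
Set Implicit Arguments. Unset Strict Implicit. Unset Printing Implicit Defensive.

Definition G : seq (nat * nat) :=
  [:: (0,2); (0,3); (0,4); (0,5); (1,3); (1,4); (1,5); (2,4); (2,5)].
Definition E (i j : nat) : bool :=
  ((i,j) \in G) || ((4 <= i) && (j == i.+1)) || ((4 <= i) && (j == i.+2)).
Definition adj (i j : nat) : bool := E i j || E j i.
Definition L (n : nat) : seq (nat * nat) :=
  G ++ [seq (x, x.+1) | x <- iota 4 (n - 5)] ++ [seq (x, x.+2) | x <- iota 4 (n - 6)].
Definition dn (n i : nat) : nat :=
  if i == 0 then 4 else if i == 1 then 3 else if i == 2 then 3 else
  if i == 3 then 2 else if i == 4 then 5 else if i == 5 then 6 else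
  if i.+1 == n then 2 else if i.+2 == n then 3 else 4.

Lemma card_count n (P : pred nat) : #|[set v : 'I_n | P v]| = count P (iota 0 n).
Proof.
rewrite cardsE cardE -val_enum_ord count_map -size_filter.
rewrite /enum_mem -enumT /= !size_filter count_filter; apply: eq_count => x.
by rewrite /= ?inE andbT.
Qed.

Lemma count_nb n (P : pred nat) (s : seq nat) : uniq s -> all (fun x => x < n) s ->
  (forall v, v < n -> P v = (v \in s)) -> count P (iota 0 n) = size s.
Proof.
move=> us als hP.
rewrite (@eq_in_count _ _ (mem s)); last by move=> v; rewrite mem_iota => /andP[_ h]; rewrite hP.
rewrite -size_filter; apply: perm_size; apply: uniq_perm => //.
  by rewrite filter_uniq // iota_uniq.
move=> x; rewrite mem_filter mem_iota /=; apply/andP/idP => [[]//|xs]; split=> //.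
by move/allP: als => /(_ x xs).
Qed.

Lemma G_bound a b : (a, b) \in G -> [&& a < 3, b < 6 & a < b].
Proof.
move=> hG; have hall : all (fun p : nat * nat => [&& p.1 < 3, p.2 < 6 & p.1 < p.2]) G by [].
exact: (allP hall _ hG).
Qed.

Lemma adjE6 u v : 6 <= u ->
  adj u v = (v == u - 2) || (v == u - 1) || (v == u.+1) || (v == u.+2).
Proof.
move=> h; rewrite /adj /E.
have -> : ((u, v) \in G) = false by apply/negP => /G_bound; lia.
have -> : ((v, u) \in G) = false by apply/negP => /G_bound; lia.
rewrite /=; lia.
Qed.


Lemma degN n u : u < n -> 13 <= n ->
  count (adj u) (iota 0 n) = dn n u.
Proof.
move=> hu hn.
case: u hu => [|[|[|[|[|[|u]]]]]] hu.
- apply: (@count_nb _ _ [:: 2; 3; 4; 5]) => //=; first by lia.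
  by case=> [|[|[|[|[|[|[|[|v]]]]]]]].
- apply: (@count_nb _ _ [:: 3; 4; 5]) => //=; first by lia.
  by case=> [|[|[|[|[|[|[|[|v]]]]]]]].
- apply: (@count_nb _ _ [:: 0; 4; 5]) => //=; first by lia.
  by case=> [|[|[|[|[|[|[|[|v]]]]]]]].
- apply: (@count_nb _ _ [:: 0; 1]) => //=; first by lia.
  by case=> [|[|[|[|[|[|[|[|v]]]]]]]].
- apply: (@count_nb _ _ [:: 0; 1; 2; 5; 6]) => //=; first by lia.
  by case=> [|[|[|[|[|[|[|[|v]]]]]]]].
- apply: (@count_nb _ _ [:: 0; 1; 2; 4; 6; 7]) => //=; first by lia.
  by case=> [|[|[|[|[|[|[|[|v]]]]]]]].
rewrite /dn /=.
case: eqP => [h1|n1].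
  apply: (@count_nb _ _ [:: u + 4; u + 5]) => /=; [rewrite !inE; lia|lia|].
  by move=> v hv; rewrite adjE6 // !inE; lia.
case: eqP => [h2|n2].
  apply: (@count_nb _ _ [:: u + 4; u + 5; u + 7]) => /=; [rewrite !inE; lia|lia|].
  by move=> v hv; rewrite adjE6 // !inE; lia.
apply: (@count_nb _ _ [:: u + 4; u + 5; u + 7; u + 8]) => /=; [rewrite !inE; lia|lia|].
by move=> v hv; rewrite adjE6 // !inE; lia.
Qed.

Lemma E_lt i j : E i j -> i < j.
Proof.
rewrite /E => /orP[/orP[/G_bound|]|]; lia.
Qed.

Lemma mem_map_pair (g : nat -> nat) (s : seq nat) i j :
  ((i, j) \in [seq (x, g x) | x <- s]) = (j == g i) && (i \in s).
Proof.
apply/mapP/andP => [[x xs [-> ->]]|[/eqP -> hi]]; first by split.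
by exists i.
Qed.

Lemma memL n i j : 13 <= n -> j < n -> ((i, j) \in L n) = E i j.
Proof.
move=> hn hj; rewrite /L /E mem_cat -orbA; congr (_ || _).
rewrite mem_cat !mem_map_pair !mem_iota; lia.
Qed.

Lemma uniqL n : uniq (L n).
Proof.
rewrite /L cat_uniq; apply/and3P; split; first by [].
  apply/hasPn => p; rewrite mem_cat => /orP[] /mapP[x]; rewrite mem_iota => /andP[h _] ->;
  by apply/negP => /G_bound; lia.
rewrite cat_uniq; apply/and3P; split.
- by rewrite map_inj_uniq ?iota_uniq // => x y [->].
- apply/hasPn => p /mapP[x _ ->]; rewrite mem_map_pair; lia.
- by rewrite map_inj_uniq ?iota_uniq // => x y [->].
Qed.

Lemma allL n : 13 <= n -> all (fun p => (p.1 < n) && (p.2 < n)) (L n).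
Proof.
move=> hn; apply/allP => -[a b]; rewrite /L !mem_cat => /orP[/G_bound|/orP[]]/=; try lia;
  rewrite mem_map_pair mem_iota; lia.
Qed.

Notation NN k := (k + 12).+1.
Lemma dnM n i : (6 <= i) -> (i + 3 <= n) -> dn n i = 4.
Proof. move=> h1 h2; rewrite /dn; repeat (case: eqP => ? /=); lia. Qed.
Lemma dnR2 n i : (6 <= i) -> i.+2 = n -> dn n i = 3.
Proof. move=> h1 h2; rewrite /dn; repeat (case: eqP => ? /=); lia. Qed.
Lemma dnR1 n i : (6 <= i) -> i.+1 = n -> dn n i = 2.
Proof. move=> h1 h2; rewrite /dn; repeat (case: eqP => ? /=); lia. Qed.

Lemma iota_split1 k : iota 4 (NN k - 5) = [:: 4; 5] ++ iota 6 (k + 4) ++ [:: k + 10; (k + 10).+1].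
Proof.
have -> : (NN k - 5 = 2 + ((k + 4) + 2)) by lia.
rewrite iotaD iotaD /=.
have -> : (4 + 2 + (k + 4) = k + 10) by lia.
by [].
Qed.

Lemma iota_split2 k : iota 4 (NN k - 6) = [:: 4; 5] ++ iota 6 (k + 3) ++ [:: k + 9; (k + 9).+1].
Proof.
have -> : (NN k - 6 = 2 + ((k + 3) + 2)) by lia.
rewrite iotaD iotaD /=.
have -> : (4 + 2 + (k + 3) = k + 9) by lia.
by [].
Qed.

Import Order.TTheory GRing.Theory Num.Theory.
Local Open Scope ring_scope.

Definition e k : rel 'I_((NN k)) := fun x y => adj x y.
Arguments e : clear implicits.

Lemma degE k (u : 'I_((NN k))) : deg (e k) u = dn (NN k) u.
Proof. by rewrite /deg (@card_count _ (adj u)) degN //; lia. Qed.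

Lemma sum_pairs m (P : 'I_m.+1 -> 'I_m.+1 -> bool) (F : 'I_m.+1 -> 'I_m.+1 -> rat)
  (s : seq (nat * nat)) :
  uniq s -> all (fun p => (p.1 < m.+1)%N && (p.2 < m.+1)%N) s ->
  (forall u v : 'I_m.+1, P u v = ((val u, val v) \in s)) ->
  \sum_(u : 'I_m.+1) \sum_(v : 'I_m.+1 | P u v) F u v =
  \sum_(p <- s) F (inord p.1) (inord p.2).
Proof.
move=> us als hP.
rewrite pair_big_dep /= -big_filter.
pose f := fun p : nat * nat => ((inord p.1 : 'I_m.+1), (inord p.2 : 'I_m.+1)).
have finj : {in s &, injective f}.
  move=> [a b] [c d] /(allP als) /andP[/= ha hb] /(allP als) /andP[/= hc hd] [].
  move=> /(congr1 val) /=; rewrite !inordK // => ->.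
  by move=> /(congr1 val) /=; rewrite !inordK // => ->.
rewrite (perm_big (map f s)); first by rewrite big_map.
apply: uniq_perm.
- by rewrite filter_uniq // index_enum_uniq.
- by rewrite map_inj_in_uniq.
move=> [u v]; rewrite mem_filter mem_index_enum andbT /= hP.
apply/idP/mapP => [h|[[a b] hab [-> ->]]].
  by exists (val u, val v) => //; rewrite /f /= !inord_val.
move/(allP als): (hab) => /andP[/= ha hb].
by rewrite !inordK.
Qed.

Lemma sum_const_iota (a N : nat) (c : rat) : \sum_(x <- iota a N) c = c *+ N.
Proof.
rewrite big_const_seq count_predT size_iota.
by elim: N => //= N ->; rewrite mulrS.
Qed.

Definition Phi k (f : nat -> nat -> rat) : rat :=
  (f 4%N 3%N + f 4%N 2%N + f 4%N 5%N + f 4%N 6%N + f 3%N 2%N + f 3%N 5%N + f 3%N 6%N + f 3%N 5%N + f 3%N 6%N)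
 + (f 5%N 6%N + f 6%N 4%N + f 4%N 4%N *+ (k + 4)%N + f 4%N 3%N + f 3%N 2%N)
 + (f 5%N 4%N + f 6%N 4%N + f 4%N 4%N *+ (k + 3)%N + f 4%N 3%N + f 4%N 2%N).

Lemma sumL k (f : nat -> nat -> rat) :
  \sum_(p <- L (NN k)) f (dn (NN k) p.1) (dn (NN k) p.2) = Phi k f.
Proof.
rewrite /L !big_cat !big_map /= iota_split1 iota_split2 !big_cat /=.
rewrite /G !big_cons !big_nil /=.
rewrite (@eq_big_seq _ _ _ _ (iota 6 (k + 4)) _ (fun _ => f 4%N 4%N)); last first.
  move=> x; rewrite mem_iota => /andP[h1 h2].
  by rewrite (@dnM _ x) ?(@dnM _ x.+1) //; lia.
rewrite (@eq_big_seq _ _ _ _ (iota 6 (k + 3)) _ (fun _ => f 4%N 4%N)); last first.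
  move=> x; rewrite mem_iota => /andP[h1 h2].
  by rewrite (@dnM _ x) ?(@dnM _ x.+2) //; lia.
rewrite !sum_const_iota.
rewrite (@dnM _ (k + 10)) ?(@dnR2 _ (k + 10).+1) ?(@dnR1 _ (k + 10).+2); try lia.
rewrite (@dnM _ (k + 9)) ?(@dnM _ (k + 9).+1) ?(@dnR2 _ (k + 9).+2) ?(@dnR1 _ (k + 9).+3); try lia.
rewrite (@dnM _ 6%N) ?(@dnM _ 7%N); try lia.
rewrite /Phi /dn /=.
ring.
Qed.

Lemma edge_sumE k (f : nat -> nat -> rat) :
  edge_sum (e k) (fun u v => f (deg (e k) u) (deg (e k) v)) = Phi k f.
Proof.
have h13 : (13 <= NN k)%N by lia.
rewrite /edge_sum (@sum_pairs _ (fun u v => (u < v)%N && e k u v) _ (L (NN k))).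
- rewrite -sumL; apply: eq_big_seq => -[a b] hab.
  move/(allP (@allL (NN k) h13)): hab => /andP[/= ha hb].
  by rewrite !degE !inordK.
- exact: uniqL.
- exact: allL.
- move=> u v; rewrite memL //= /e /adj.
  apply/idP/idP => [/andP[h /orP[//|/E_lt]]|h]; first by lia.
  by rewrite (E_lt h) h.
Qed.

Lemma nedgesE k : (nedges (e k))%:R = Phi k (fun _ _ => 1).
Proof.
rewrite -(edge_sumE k (fun _ _ => 1)) /nedges /edge_sum natr_sum.
by apply: eq_bigr => u _; rewrite natr_sum.
Qed.

Lemma inord_eqE k a b : (a < NN k)%N -> (b < NN k)%N ->
  (inord a == inord b :> 'I_(NN k)) = (a == b).
Proof. by move=> ha hb; rewrite -val_eqE /= !inordK. Qed.

Theorem theorem4 (n : nat) : (13 <= n)%N ->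
  exists e : rel 'I_n,
    simple_graph e /\ connected_graph e /\ neutral e /\ ~ is_tree e.
Proof.
move=> hn; have [k ->] : exists k, n = NN k by exists (n - 13)%N; lia.
exists (e k).
have hk : (0 : rat) <= k%:R := ler0n _ _.
have hm : (2 * k%:R + 24 : rat) != 0.
  by rewrite gt_eqF //; lra.
have mE : (nedges (e k))%:R = 2 * k%:R + 24 :> rat.
  by rewrite nedgesE /Phi /=; ring.
split; [split|split; [|split]].
- by move=> x y; rewrite /e /adj orbC.
- move=> x; rewrite /e /adj orbb; apply/negbTE/negP => /E_lt; lia.
- have c4 : forall i, (i < NN k)%N -> connect (e k) (inord 4) (inord i).
    elim=> [|i IH] hi.
      by apply: connect1; rewrite /e !inordK //; lia.
    have [i4|i4] := ltnP i 4%N.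
      case: i i4 {IH hi} => [|[|[|[|//]]]] _.
      - by apply: connect1; rewrite /e !inordK //; lia.
      - by apply: connect1; rewrite /e !inordK //; lia.
      - apply: (@connect_trans _ _ (inord 0)).
          by apply: connect1; rewrite /e !inordK //; lia.
        by apply: connect1; rewrite /e !inordK //; lia.
      - exact: connect0.
    apply: (@connect_trans _ _ (inord i)); first by apply: IH; lia.
    apply: connect1; rewrite /e !inordK; try lia.
    by rewrite /adj /E i4 eqxx /= orbT.
  have csym : connect_sym (e k) by apply: sym_connect_sym => x y; rewrite /e /adj orbC.
  move=> x y; apply: (@connect_trans _ _ (inord 4)).
    by rewrite csym -(inord_val x); apply: c4.
  by rewrite -(inord_val y); apply: c4.
- split; last split.
  + rewrite lt0n; apply/eqP => h0; move: mE; rewrite h0 /= => h.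
    suff : (0 : rat) < 2 * k%:R + 24 by rewrite -h ltxx.
    lra.
  + have -> : assort_den (e k) = 27 / (2 * k%:R + 24).
      rewrite /assort_den /assort_mean mE.
      rewrite (edge_sumE k (fun a b : nat => 2^-1 * (a%:R ^+ 2 + b%:R ^+ 2))).
      rewrite (edge_sumE k (fun a b : nat => 2^-1 * (a%:R + b%:R))).
      rewrite /Phi /=.
      by field.
    by rewrite mulf_neq0 // invr_eq0.
  + rewrite /assortativity.
    have -> : assort_num (e k) = 0.
      rewrite /assort_num /assort_mean mE.
      rewrite (edge_sumE k (fun a b : nat => a%:R * b%:R)).
      rewrite (edge_sumE k (fun a b : nat => 2^-1 * (a%:R + b%:R))).
      rewrite /Phi /=.
      by field.
    by rewrite mul0r.
- move=> [_ hac].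
  set s := [:: inord 4; inord 5; inord 6] : seq 'I_(NN k).
  have hu : uniq s by rewrite /s /= !inE !inord_eqE //; lia.
  have hc : cycle (e k) s by rewrite /s /= /e !inordK //; lia.
  by move: (hac s hu isT); rewrite hc.
Qed.
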